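(* Let $G=(V,E)$ be the complete graph on $V=\{1,\ldots,n\}$ with real edge weights $(a_{ij})$, and let $V=L\cup R$ be a partition with $\sum_{i\in L,\,j\in R}|a_{ij}|\geqslant\frac12\sum_{ij\in E}|a_{ij}|$. Then there exists $S\subseteq L$ with \[\sum_{j\in R}\left|\sum_{i\in S}a_{ij}\right|\geqslant\frac{1}{200\sqrt n}\sum_{ij\in E}|a_{ij}|.\]
   Context: $L\cap R=\emptyset$, and $a_{ij}=a_{ji}$ denotes the weight of the edge $\{i,j\}$. *)

(* Defs.v *)
From HB Require Import structures.
From mathcomp Require Import all_boot all_order all_algebra.
Set Implicit Arguments. Unset Strict Implicit. Unset Printing Implicit Defensive.
Import Order.TTheory GRing.Theory Num.Theory.
Local Open Scope ring_scope.

Definition total_weight (R : numDomainType) (n : nat) (a : 'I_n -> 'I_n -> R) : R :=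
  \sum_(i < n) \sum_(j < n | (i < j)%N) `|a i j|.

(* Main.v *)
Require Import Defs.
From HB Require Import structures.
From mathcomp Require Import all_boot all_order all_algebra.
From mathcomp Require Import ring lra.
Import Order.TTheory GRing.Theory Num.Theory.
Local Open Scope ring_scope.

Fixpoint Av (R : rcfType) (n : nat) (l : seq 'I_n) (B : {set 'I_n})
  (g : {set 'I_n} -> R) {struct l} : R :=
  if l is i :: l' then (@Av R n l' (i |: B) g + @Av R n l' B g) / 2 else g B.
Arguments Av {R n}.

Lemma Av_ex (R : rcfType) (n : nat) (l : seq 'I_n) (B : {set 'I_n}) (g : {set 'I_n} -> R) :
  exists S : {set 'I_n}, S \subset B :|: [set x in l] /\ Av l B g <= g S.
Proof.
elim: l B => [|i l IH] B /=.
  by exists B; rewrite subsetUl lexx.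
have [S1 [h1 h3]] := IH (i |: B); have [S2 [h2 h4]] := IH B.
case: (leP (Av l (i |: B) g) (Av l B g)) => h.
  exists S2; split; last by lra.
  apply: (subset_trans h2); apply/subsetP => x; rewrite !inE => /orP[->|->] //.
  by rewrite orbT orbT.
exists S1; split; last by lra.
apply: (subset_trans h1); apply/subsetP => x; rewrite !inE.
by case/orP => [/orP[->|->]|->] //; rewrite ?orbT.
Qed.

Lemma Av_add (R : rcfType) (n : nat) (l : seq 'I_n) B (f g : {set 'I_n} -> R) :
  Av l B (fun S => f S + g S) = Av l B f + Av l B g.
Proof. elim: l B => [|i l IH] B //=; rewrite !IH; by field. Qed.

Lemma Av_scale (R : rcfType) (n : nat) (l : seq 'I_n) B c (f : {set 'I_n} -> R) :
  Av l B (fun S => c * f S) = c * Av l B f.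
Proof. elim: l B => [|i l IH] B //=; rewrite !IH; by field. Qed.

Lemma Av_le (R : rcfType) (n : nat) (l : seq 'I_n) B (f g : {set 'I_n} -> R) :
  (forall S, f S <= g S) -> Av l B f <= Av l B g.
Proof.
move=> fg; elim: l B => [|i l IH] B //=.
have := IH (i |: B); have := IH B; lra.
Qed.

Lemma Av_sum (R : rcfType) (n : nat) (l : seq 'I_n) B (J : {set 'I_n})
  (F : 'I_n -> {set 'I_n} -> R) :
  Av l B (fun S => \sum_(j in J) F j S) = \sum_(j in J) Av l B (F j).
Proof.
elim: l B => [|i l IH] B //=.
by rewrite !IH -big_split /= mulr_suml.
Qed.

Lemma Av_M2 (R : rcfType) (n : nat) (x : 'I_n -> R) (l : seq 'I_n) (B : {set 'I_n}) :
  uniq l -> (forall k, k \in l -> k \notin B) ->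
  Av l B (fun S => (\sum_(k in S) x k) ^+ 2) =
  (\sum_(k in B) x k + (\sum_(k <- l) x k) / 2) ^+ 2 + (\sum_(k <- l) x k ^+ 2) / 4.
Proof.
elim: l B => [|i l IH] B /=.
  by move=> _ _; rewrite !big_nil; by field.
move=> /andP[il ul] hB.
rewrite IH //; last first.
  move=> k kl; rewrite !inE negb_or hB ?inE ?kl ?orbT // andbT.
  by apply/eqP=> ki; move: il; rewrite -ki kl.
rewrite IH //; last by move=> k kl; apply: hB; rewrite inE kl orbT.
rewrite big_setU1 /=; last by apply: hB; rewrite inE eqxx.
by rewrite !big_cons; field.
Qed.

Lemma Av_M4 (R : rcfType) (n : nat) (x : 'I_n -> R) (l : seq 'I_n) (B : {set 'I_n}) :
  uniq l -> (forall k, k \in l -> k \notin B) ->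
  Av l B (fun S => (\sum_(k in S) x k) ^+ 4) <=
  (\sum_(k in B) x k + (\sum_(k <- l) x k) / 2) ^+ 4
  + 3/2 * (\sum_(k in B) x k + (\sum_(k <- l) x k) / 2) ^+ 2 * (\sum_(k <- l) x k ^+ 2)
  + 3/16 * (\sum_(k <- l) x k ^+ 2) ^+ 2.
Proof.
elim: l B => [|i l IH] B /=.
  by move=> _ _; rewrite !big_nil; lra.
move=> /andP[il ul] hB.
have h1 := IH (i |: B) ul.
have h2 := IH B ul.
have h1' : forall k, k \in l -> k \notin i |: B.
  move=> k kl; rewrite !inE negb_or hB ?inE ?kl ?orbT // andbT.
  by apply/eqP=> ki; move: il; rewrite -ki kl.
have h2' : forall k, k \in l -> k \notin B by move=> k kl; apply: hB; rewrite inE kl orbT.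
move: (h1 h1') (h2 h2').
rewrite big_setU1 /=; last by apply: hB; rewrite inE eqxx.
rewrite !big_cons.
set a := \sum_(k in B) x k; set s := \sum_(k <- l) x k; set q := \sum_(k <- l) x k ^+ 2.
set y := x i.
move=> H1 H2.
have key : (a + (y + s) / 2) ^+ 4 + 3 / 2 * (a + (y + s) / 2) ^+ 2 * (y ^+ 2 + q) +
   3 / 16 * (y ^+ 2 + q) ^+ 2 -
   (((y + a + s / 2) ^+ 4 + 3 / 2 * (y + a + s / 2) ^+ 2 * q + 3 / 16 * q ^+ 2)
   + ((a + s / 2) ^+ 4 + 3 / 2 * (a + s / 2) ^+ 2 * q + 3 / 16 * q ^+ 2)) / 2
   = y ^+ 4 / 8 by field.
have y4 : 0 <= y ^+ 4 by rewrite (_ : 4 = 2 * 2)%N // exprM sqr_ge0.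
lra.
Qed.

Lemma pointwise (R : rcfType) (lam t : R) : 0 <= lam ->
  3 * lam ^+ 2 * t ^+ 2 <= 2 * lam ^+ 3 * `|t| + t ^+ 4.
Proof.
move=> hl.
have e2 : t ^+ 2 = `|t| ^+ 2 by rewrite real_normK ?num_real.
have e4 : t ^+ 4 = `|t| ^+ 4 by rewrite (_ : 4 = 2 * 2)%N // !exprM e2.
rewrite e2 e4; set u := `|t|.
have hu : 0 <= u by rewrite normr_ge0.
have : 0 <= u * (u - lam) ^+ 2 * (u + 2 * lam).
  apply: mulr_ge0; first by apply: mulr_ge0 => //; apply: sqr_ge0.
  lra.
have -> : u * (u - lam) ^+ 2 * (u + 2 * lam) = 2 * lam ^+ 3 * u + u ^+ 4 - 3 * lam ^+ 2 * u ^+ 2 by ring.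
lra.
Qed.

Lemma CS (R : rcfType) (n : nat) (x : 'I_n -> R) (l : seq 'I_n) :
  (\sum_(k <- l) `|x k|) ^+ 2 <= (size l)%:R * \sum_(k <- l) x k ^+ 2.
Proof.
elim: l => [|i l IH] /=; first by rewrite !big_nil mul0r expr0n.
rewrite !big_cons.
set A := \sum_(k <- l) `|x k|; set Q := \sum_(k <- l) x k ^+ 2.
have e2 : x i ^+ 2 = `|x i| ^+ 2 by rewrite real_normK ?num_real.
rewrite e2; set a := `|x i|.
have hQ : 0 <= Q by rewrite /Q; apply: sumr_ge0 => k _; exact: sqr_ge0.
have hm : 0 <= (size l)%:R :> R by apply: ler0n.
rewrite -natr1.
move: hm IH; set m := (size l)%:R => hm IH.
case: (ltrgt0P m) => [mp|mn|m0]; last first.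
- rewrite m0 mul0r in IH.
  have A0 : A = 0 by apply/eqP; rewrite -sqrf_eq0 eq_le IH sqr_ge0.
  rewrite A0 m0; nra.
- lra.
- have h1 : 0 <= (m * a - A) ^+ 2 by apply: sqr_ge0.
  have h2 : 0 <= m * ((m + 1) * (a ^+ 2 + Q) - (a + A) ^+ 2).
    have -> : m * ((m + 1) * (a ^+ 2 + Q) - (a + A) ^+ 2) =
       (m * a - A) ^+ 2 + (m * Q - A ^+ 2) + m * (m * Q - A ^+ 2) by ring.
    have : 0 <= m * Q - A ^+ 2 by rewrite subr_ge0.
    move=> h3; apply: addr_ge0; first exact: addr_ge0.
    apply: mulr_ge0 => //; lra.
  rewrite pmulr_rge0 // in h2; lra.
Qed.

Arguments Av_ex {R n}. Arguments Av_add {R n}. Arguments Av_scale {R n}.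
Arguments Av_le {R n}. Arguments Av_sum {R n}. Arguments Av_M2 {R n} x {l B}.
Arguments Av_M4 {R n} x {l B}. Arguments pointwise {R}. Arguments CS {R n}.

Lemma Av_const (R : rcfType) (n : nat) (l : seq 'I_n) B (c : R) :
  Av l B (fun _ => c) = c.
Proof. elim: l B => [|i l IH] B //=; rewrite !IH; by field. Qed.
Arguments Av_const {R n}.

Lemma Av_ge0 (R : rcfType) (n : nat) (l : seq 'I_n) B (f : {set 'I_n} -> R) :
  (forall S, 0 <= f S) -> 0 <= Av l B f.
Proof. by move=> h; rewrite -(Av_const l B (0:R)); apply: Av_le. Qed.
Arguments Av_ge0 {R n}.

Lemma column (R : rcfType) (n : nat) (x : 'I_n -> R) (l : seq 'I_n) : uniq l ->
  81 * (\sum_(k <- l) `|x k|) ^+ 2 <=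
  1024 * (size l)%:R * (Av l set0 (fun S => `|\sum_(k in S) x k|)) ^+ 2.
Proof.
move=> ul.
have hB : forall k, k \in l -> k \notin (set0 : {set 'I_n}) by move=> k _; rewrite inE.
have M2 := Av_M2 x ul hB; have M4 := Av_M4 x ul hB.
rewrite big_set0 add0r in M2 M4.
move: M2 M4.
set s := \sum_(k <- l) x k; set q := \sum_(k <- l) x k ^+ 2.
set m2 := Av l set0 _; set m4 := Av l set0 _.
set E := Av l set0 _.
move=> M2 M4.
have q0 : 0 <= q by rewrite /q; apply: sumr_ge0 => k _; exact: sqr_ge0.
have s20 : 0 <= s ^+ 2 by apply: sqr_ge0.
have hm2 : m2 = s ^+ 2 / 4 + q / 4 by rewrite M2; field.
have m20 : 0 <= m2 by rewrite hm2; lra.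
have m4b : m4 <= 3 * m2 ^+ 2.
  have : 3 * m2 ^+ 2 - ((s / 2) ^+ 4 + 3 / 2 * (s / 2) ^+ 2 * q + 3 / 16 * q ^+ 2)
         = (s ^+ 2) ^+ 2 / 8 by rewrite hm2; field.
  have : 0 <= (s ^+ 2) ^+ 2 by apply: sqr_ge0.
  lra.
have E0 : 0 <= E.
  rewrite -(Av_const l set0 (0:R)); apply: Av_le => S; exact: normr_ge0.
set sg := Num.sqrt m2.
have sg0 : 0 <= sg by apply: sqrtr_ge0.
have sgm : sg ^+ 2 = m2 by apply: sqr_sqrtr.
have P := Av_le l set0 (fun S => 3 * (2 * sg) ^+ 2 * (\sum_(k in S) x k) ^+ 2)
  (fun S => 2 * (2 * sg) ^+ 3 * `|\sum_(k in S) x k| + (\sum_(k in S) x k) ^+ 4) (fun S => pointwise _ (\sum_(k in S) x k) (mulr_ge0 (ler0n R 2) sg0)).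
rewrite Av_add !Av_scale -/m2 -/m4 -/E in P.
have key : 0 <= sg ^+ 3 * (16 * E - 9 * sg).
  have e1 : 3 * (2 * sg) ^+ 2 * m2 = 12 * sg ^+ 4 by rewrite -sgm; ring.
  have e2 : 2 * (2 * sg) ^+ 3 * E = 16 * (sg ^+ 3 * E) by ring.
  have e3 : m2 ^+ 2 = sg ^+ 4 by rewrite -sgm; ring.
  have e4 : sg ^+ 3 * (16 * E - 9 * sg) = 16 * (sg ^+ 3 * E) - 9 * sg ^+ 4 by ring.
  rewrite e4; rewrite e1 e2 in P; rewrite e3 in m4b; lra.
have hq : 81 * q <= 1024 * E ^+ 2.
  case: (ltrgt0P sg) => [sp|sn|s0]; last first.
  - have : m2 = 0 by rewrite -sgm s0 expr0n.
    move=> m0; have : q = 0 by lra.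
    move=> ->; rewrite mulr0; apply: mulr_ge0 => //; exact: sqr_ge0.
  - lra.
  - have h1 : 0 <= 16 * E - 9 * sg.
      by move: key; rewrite pmulr_rge0 // exprn_gt0.
    have h2 : (9 * sg) ^+ 2 <= (16 * E) ^+ 2.
      rewrite ler_sqr ?nnegrE; [lra|lra|lra].
    move: h2; rewrite !exprMn sgm; lra.
have cs := CS x l.
have hm : 0 <= (size l)%:R :> R by apply: ler0n.
move: cs hm; set A := (\sum_(k <- l) `|x k|) ^+ 2; set m := (size l)%:R => cs hm.
have : m * (81 * q) <= m * (1024 * E ^+ 2) by apply: ler_wpM2l.
have : 81 * A <= 81 * (m * q) by rewrite ler_pM2l.
move=> h1 h2.
have e : 1024 * m * E ^+ 2 = m * (1024 * E ^+ 2) by ring.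
have e' : m * (81 * q) = 81 * (m * q) by ring.
rewrite e; lra.
Qed.
Arguments column {R n}.

Theorem mainTheorem9 (R : rcfType) (n : nat) (a : 'I_n -> 'I_n -> R)
  (a_sym : forall i j, a i j = a j i)
  (L Rs : {set 'I_n})
  (hdisj : L :&: Rs = set0) (hcover : L :|: Rs = setT)
  (hcut : \sum_(i in L) \sum_(j in Rs) `|a i j| >= total_weight a / 2) :
  exists S : {set 'I_n}, S \subset L /\
    \sum_(j in Rs) `|\sum_(i in S) a i j| >= total_weight a / (200 * Num.sqrt (n%:R)).
Proof.
set W := total_weight a.
have W0 : 0 <= W.
  by rewrite /W /total_weight; apply: sumr_ge0 => i _; apply: sumr_ge0 => j _; exact: normr_ge0.
set l := enum L.
have ul : uniq l by apply: enum_uniq.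
set m := (size l)%:R : R.
have hm : 0 <= m by apply: ler0n.
have mn : m <= n%:R.
  by rewrite /m ler_nat /l -cardE -[X in (_ <= X)%N]card_ord max_card.
set F := fun (j : 'I_n) (S : {set 'I_n}) => `|\sum_(k in S) a k j|.
have colj : forall j, 9 * \sum_(k in L) `|a k j| <= 32 * Num.sqrt m * Av l set0 (F j).
  move=> j.
  have c := column (fun k => a k j) l ul.
  rewrite /l big_enum /= -/l -/m in c.
  have E0 : 0 <= Av l set0 (F j).
    apply: Av_ge0 => S; exact: normr_ge0.
  have c0 : 0 <= \sum_(k in L) `|a k j| by apply: sumr_ge0 => k _; exact: normr_ge0.
  rewrite -ler_sqr ?nnegrE; last first.
  - by rewrite !mulr_ge0 // ?sqrtr_ge0.
  - by rewrite mulr_ge0.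
  rewrite !exprMn sqr_sqrtr //.
  have -> : (32:R) ^+ 2 = 1024 by rewrite expr2; rewrite -natrM.
  have -> : (9:R) ^+ 2 = 81 by rewrite expr2; rewrite -natrM.
  move: c; rewrite /F; set E := Av _ _ _; set c' := \sum_(k in L) _.
  move=> c.
  have -> : 1024 * m * E ^+ 2 = 1024 * (m * E ^+ 2) by ring.
  have <- : 1024 * m * E ^+ 2 = 1024 * (m * E ^+ 2) by ring.
  exact: c.
have hsum : 9 * \sum_(i in L) \sum_(j in Rs) `|a i j| <=
            32 * Num.sqrt m * \sum_(j in Rs) Av l set0 (F j).
  rewrite exchange_big /= !mulr_sumr; apply: ler_sum => j _; exact: colj.
rewrite -Av_sum in hsum.
have [S [hS hG]] := Av_ex l set0 (fun S => \sum_(j in Rs) F j S).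
exists S; split.
  apply: (subset_trans hS); apply/subsetP => x; rewrite !inE /l mem_enum; by [].
set G := \sum_(j in Rs) `|\sum_(i in S) a i j|.
have hG' : Av l set0 (fun S => \sum_(j in Rs) F j S) <= G by exact: hG.
have G0 : 0 <= G by apply: sumr_ge0 => j _; exact: normr_ge0.
have sq : Num.sqrt m <= Num.sqrt n%:R by rewrite ler_sqrt // ler0n.
have t1 : Num.sqrt m * Av l set0 (fun S => \sum_(j in Rs) F j S) <= Num.sqrt n%:R * G.
  apply: ler_pM => //; first exact: sqrtr_ge0.
  apply: Av_ge0 => S' /=; apply: sumr_ge0 => j _; exact: normr_ge0.
case: (ltrgt0P (Num.sqrt (n%:R : R))) => [sp|sn|s0].
- rewrite ler_pdivrMr; last by rewrite mulr_gt0.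
  move: hcut hsum t1; rewrite -/W.
  set C := \sum_(i in L) _; set T := Num.sqrt m * _; set U := Num.sqrt n%:R * G.
  move=> h1 h2 h3.
  have -> : G * (200 * Num.sqrt n%:R) = 200 * U by rewrite /U; ring.
  have : 0 <= U by rewrite mulr_ge0 // ltW.
  have e : 32 * Num.sqrt m * Av l set0 (fun S => \sum_(j in Rs) F j S) = 32 * T by rewrite /T; ring.
  rewrite e in h2; lra.
- by move: (sqrtr_ge0 (n%:R : R)); rewrite leNgt sn.
- by rewrite s0 mulr0 invr0 mulr0.
Qed.
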